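(* For $\mathbf{x}=(x_1,\dots,x_N)^{\mathrm T}\in\mathbb{R}^N$ define $$\ell_{\mathrm{osb}}(\mathbf{x})=\Big(\sum_{n=1}^N x_n^2\Big)\Big(\sum_{n=1}^N x_n^4\Big)-\Big(\sum_{n=1}^N x_n^3\Big)^2.$$ Then $\ell_{\mathrm{osb}}(\mathbf{x})\ge0$ for all $\mathbf{x}$, and $\ell_{\mathrm{osb}}(\mathbf{x})=0$ if and only if $\mathbf{x}\in\{0,\alpha\}^N$ for some $\alpha\in\mathbb{R}$. Furthermore, $\ell_{\mathrm{osb}}$ has no spurious stationary points: $\nabla\ell_{\mathrm{osb}}(\mathbf{x})=\mathbf{0}$ holds only if $\mathbf{x}\in\{0,\alpha\}^N$ for some $\alpha\in\mathbb{R}$.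
   Context: A spurious stationary point of a differentiable function $\ell$ whose zero set is $\mathcal{X}$ is a point $\mathbf{x}\notin\mathcal{X}$ with $\nabla\ell(\mathbf{x})=\mathbf{0}$. *)

(* Defs.v *)
From HB Require Import structures.
From mathcomp Require Import all_boot all_order all_algebra.
From mathcomp Require Import all_classical all_reals all_analysis.
Set Implicit Arguments. Unset Strict Implicit. Unset Printing Implicit Defensive.
Import Order.TTheory GRing.Theory Num.Theory.
Import numFieldNormedType.Exports.
Local Open Scope ring_scope.

Definition ell_osb (R : realType) (N : nat) (x : 'rV[R]_N) : R :=
  (\sum_(n < N) x 0 n ^+ 2) * (\sum_(n < N) x 0 n ^+ 4)
  - (\sum_(n < N) x 0 n ^+ 3) ^+ 2.

Definition gradient (R : realType) (N : nat) (f : 'rV[R]_N -> R)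
  (x : 'rV[R]_N) : 'rV[R]_N :=
  \row_(n < N) derive f x (delta_mx 0 n).

Definition in_zero_alpha (R : realType) (N : nat) (x : 'rV[R]_N) (alpha : R) :=
  forall n : 'I_N, x 0 n = 0 \/ x 0 n = alpha.

(* Main.v *)
Require Import Defs.
From HB Require Import structures.
From mathcomp Require Import all_boot all_order all_algebra.
From mathcomp Require Import all_classical all_reals all_analysis.
From mathcomp Require Import ring lra.
Import Order.TTheory GRing.Theory Num.Theory.
Import numFieldNormedType.Exports.
Local Open Scope ring_scope.

Section S.
Variables (R : realType) (N : nat).

Lemma sum_shift (x : 'rV[R]_N) (k : 'I_N) (h : R) p :
  \sum_(n < N) (h *: delta_mx 0 k + x) 0 n ^+ p =
  \sum_(n < N) x 0 n ^+ p + ((x 0 k + h) ^+ p - x 0 k ^+ p).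
Proof.
rewrite (bigD1 k) //= [in RHS](bigD1 k) //=.
rewrite !mxE eqxx /= eqxx mulr1.
have -> : \sum_(i < N | i != k) (h *: delta_mx 0 k + x) 0 i ^+ p =
          \sum_(i < N | i != k) x 0 i ^+ p.
  by apply: eq_bigr => n nk; rewrite !mxE (negbTE nk) andbF mulr0 add0r.
rewrite (addrC h); ring.
Qed.

Definition Sp (xk s : R) (p : nat) : {poly R} := s%:P + ((xk%:P + 'X) ^+ p - (xk ^+ p)%:P).

Lemma partial_ell (x : 'rV[R]_N) (k : 'I_N) :
  derive (@ell_osb R N) x (delta_mx 0 k) =
  let a := \sum_(n < N) x 0 n ^+ 2 in
  let b := \sum_(n < N) x 0 n ^+ 4 in
  let c := \sum_(n < N) x 0 n ^+ 3 in
  2 * x 0 k * b + 4 * a * x 0 k ^+ 3 - 6 * c * x 0 k ^+ 2.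
Proof.
set a := \sum_(n < N) x 0 n ^+ 2.
set b := \sum_(n < N) x 0 n ^+ 4.
set c := \sum_(n < N) x 0 n ^+ 3.
set xk := x 0 k.
pose P := Sp xk a 2 * Sp xk b 4 - Sp xk c 3 ^+ 2.
have -> : derive (@ell_osb R N) x (delta_mx 0 k) = derive (horner P) 0 1.
  rewrite /derive.
  suff -> : (fun h : R => h^-1 *: ((@ell_osb R N \o shift x) (h *: delta_mx 0 k) - @ell_osb R N x))
     = (fun h : R => h^-1 *: ((horner P \o shift 0) (h *: 1) - horner P 0)) by [].
  apply/funext => h /=.
  rewrite /P /Sp /ell_osb !(hornerD, hornerN, hornerM, hornerC, hornerX, horner_exp) !sum_shift -[h%:A]/(h * 1) mulr1.
  rewrite -/a -/b -/c. congr (_ *: _). rewrite /xk addr0. ring.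
rewrite -derive1E -derivE /P /Sp.
rewrite !derivCE !hornerE /=.
rewrite /=. ring.
Qed.

Lemma lagrange (x : 'rV[R]_N) :
  \sum_(i < N) \sum_(j < N) (x 0 i * x 0 j ^+ 2 - x 0 j * x 0 i ^+ 2) ^+ 2
  = 2 * ell_osb x.
Proof.
set a := \sum_(n < N) x 0 n ^+ 2.
set b := \sum_(n < N) x 0 n ^+ 4.
set c := \sum_(n < N) x 0 n ^+ 3.
have E : forall i j : 'I_N, (x 0 i * x 0 j ^+ 2 - x 0 j * x 0 i ^+ 2) ^+ 2 =
   x 0 i ^+ 2 * x 0 j ^+ 4 + x 0 j ^+ 2 * x 0 i ^+ 4 - 2 * (x 0 i ^+ 3 * x 0 j ^+ 3).
  by move=> i j; ring.
have AB : a * b = \sum_(i < N) \sum_(j < N) x 0 i ^+ 2 * x 0 j ^+ 4.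
  by rewrite big_distrl; apply: eq_bigr => i _; rewrite big_distrr.
have BA : a * b = \sum_(i < N) \sum_(j < N) x 0 j ^+ 2 * x 0 i ^+ 4.
  by rewrite exchange_big /= AB.
have CC : c * c = \sum_(i < N) \sum_(j < N) x 0 i ^+ 3 * x 0 j ^+ 3.
  by rewrite big_distrl; apply: eq_bigr => i _; rewrite big_distrr.
have -> : 2 * ell_osb x = a * b + a * b - 2 * (c * c) by rewrite /ell_osb -/a -/b -/c; ring.
rewrite {1}AB BA CC mulr_sumr -big_split /= -sumrB; apply: eq_bigr => i _.
rewrite mulr_sumr -big_split /= -sumrB; apply: eq_bigr => j _.
by rewrite E.
Qed.

Lemma ell_ge0 (x : 'rV[R]_N) : 0 <= ell_osb x.
Proof.
have : 0 <= 2 * ell_osb x.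
  rewrite -lagrange; apply: sumr_ge0 => i _; apply: sumr_ge0 => j _; exact: sqr_ge0.
by rewrite pmulr_rge0.
Qed.

Lemma ell_eq0 (x : 'rV[R]_N) :
  ell_osb x = 0 <-> exists alpha : R, in_zero_alpha x alpha.
Proof.
split.
- move=> H0.
  have H2 : \sum_(i < N) \sum_(j < N) (x 0 i * x 0 j ^+ 2 - x 0 j * x 0 i ^+ 2) ^+ 2 = 0.
    by rewrite lagrange H0 mulr0.
  have H3 : forall i j : 'I_N, x 0 i * x 0 j ^+ 2 - x 0 j * x 0 i ^+ 2 = 0.
    move=> i j.
    have Hi : \sum_(j < N) (x 0 i * x 0 j ^+ 2 - x 0 j * x 0 i ^+ 2) ^+ 2 = 0.
      move: H2; move/psumr_eq0P; apply => // i' _.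
      by apply: sumr_ge0 => j' _; exact: sqr_ge0.
    have Hj : (x 0 i * x 0 j ^+ 2 - x 0 j * x 0 i ^+ 2) ^+ 2 = 0.
      move: Hi; move/psumr_eq0P; apply => // j' _; exact: sqr_ge0.
    by move/eqP: Hj; rewrite sqrf_eq0 => /eqP.
  case: (pickP (fun k : 'I_N => x 0 k != 0)) => [k xk|none].
  + exists (x 0 k) => n.
    have := H3 n k.
    have -> : x 0 n * x 0 k ^+ 2 - x 0 k * x 0 n ^+ 2 = x 0 n * x 0 k * (x 0 k - x 0 n) by ring.
    move/eqP; rewrite !mulf_eq0 subr_eq0 (negbTE xk) orbF => /orP [/eqP|/eqP] ->; by [left|right].
  + exists 0 => n; left; have := none n; by move/negbFE/eqP.
- move=> [al Hal].
  have : 2 * ell_osb x = 0.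
    rewrite -lagrange big1 // => i _; rewrite big1 // => j _.
    by case: (Hal i) => ->; case: (Hal j) => ->; rewrite expr2; ring.
  by move/eqP; rewrite mulf_eq0 pnatr_eq0 /= => /eqP.
Qed.

Lemma grad_eq0 (x : 'rV[R]_N) : gradient (@ell_osb R N) x = 0 -> ell_osb x = 0.
Proof.
move=> G.
set a := \sum_(n < N) x 0 n ^+ 2.
set b := \sum_(n < N) x 0 n ^+ 4.
set c := \sum_(n < N) x 0 n ^+ 3.
have Gk : forall k : 'I_N, 2 * x 0 k * b + 4 * a * x 0 k ^+ 3 - 6 * c * x 0 k ^+ 2 = 0.
  move=> k; have := congr1 (fun M : 'rV[R]_N => M 0 k) G.
  by rewrite /gradient !mxE partial_ell.
have S0 : \sum_(k < N) x 0 k * (2 * x 0 k * b + 4 * a * x 0 k ^+ 3 - 6 * c * x 0 k ^+ 2) = 0.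
  by rewrite big1 // => k _; rewrite Gk mulr0.
have S1 : \sum_(k < N) x 0 k * (2 * x 0 k * b + 4 * a * x 0 k ^+ 3 - 6 * c * x 0 k ^+ 2)
   = (2 * b) * a + (4 * a) * b - (6 * c) * c.
  rewrite (eq_bigr (fun k => x 0 k ^+ 2 * (2 * b) + x 0 k ^+ 4 * (4 * a) - x 0 k ^+ 3 * (6 * c))); last by move=> k _; ring.
  rewrite sumrB big_split /= -!mulr_suml -/a -/b -/c; ring.
have : 6 * ell_osb x = 0 by rewrite /ell_osb -/a -/b -/c; rewrite -S0 S1; ring.
by move/eqP; rewrite mulf_eq0 pnatr_eq0 /= => /eqP.
Qed.
End S.

Theorem mainTheorem4 (R : realType) (N : nat) :
  (forall x : 'rV[R]_N, 0 <= ell_osb x) /\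
  (forall x : 'rV[R]_N, ell_osb x = 0 <-> exists alpha : R, in_zero_alpha x alpha) /\
  (forall x : 'rV[R]_N, gradient (@ell_osb R N) x = 0 ->
     exists alpha : R, in_zero_alpha x alpha).
Proof.
split; first exact: ell_ge0.
split; first exact: ell_eq0.
by move=> x /grad_eq0 /ell_eq0.
Qed.
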